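(* Let $n\ge 1$ and let $x:\mathbb{N}\to\mathbb{R}$ satisfy $x(t+n)=a_1x(t+n-1)+\dots+a_nx(t)$ for all $t\in\mathbb{N}$, with $a_1,\dots,a_n\in\mathbb{R}$, and assume $x$ satisfies no linear difference equation $x(t+m)=c_1x(t+m-1)+\dots+c_mx(t)$ ($\forall t$) of order $m<n$. Let $X\in\mathbb{R}(z)$ be the rational function whose expansion at infinity is $\sum_{t\ge0}x(t)z^{-(t+1)}$. Then $a_1,\dots,a_n$ are linearly identifiable without determining the initial conditions: the $(n+1)\times(n+1)$ matrix $\mathcal{N}$ whose $\mu$-th row ($0\le\mu\le n$) is $$\Big(\tfrac{d^{n+\mu}}{dz^{n+\mu}}(z^nX),\ \tfrac{d^{n+\mu}}{dz^{n+\mu}}(z^{n-1}X),\ \dots,\ \tfrac{d^{n+\mu}}{dz^{n+\mu}}X\Big)$$ has rank $n$, and $(\alpha_1,\dots,\alpha_n)=(a_1,\dots,a_n)$ is the unique solution in $\mathbb{R}(z)^n$ of the linear system $$\frac{d^{n+\mu}}{dz^{n+\mu}}(z^nX)=\sum_{i=1}^n\alpha_i\,\frac{d^{n+\mu}}{dz^{n+\mu}}(z^{n-i}X),\qquad \mu=0,1,\dots,n.$$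
   Context: $\mathbb{R}(z)$ is the field of real rational functions with derivation $d/dz$. Here $Q(z)X(z)$, with $Q(z)=z^n-a_1z^{n-1}-\dots-a_n$, is a polynomial of degree at most $n-1$ encoding the initial conditions; derivatives of order $\ge n$ eliminate it. *)

(* Defs.v *)
From HB Require Import structures.
From mathcomp Require Import all_boot all_order all_algebra.
Set Implicit Arguments. Unset Strict Implicit. Unset Printing Implicit Defensive.
Import Order.TTheory GRing.Theory Num.Theory.
Local Open Scope ring_scope.

Notation ratfun R := {fraction {poly R}}.
Notation "x %:F" := (@FracField.tofrac _ x) : ring_scope.

Section RatFun.
Variable R : realFieldType.

Definition zF : ratfun R := ('X)%:F.

(* The derivation d/dz on R(z): computed on any representative p/q as
   (p' q - p q') / q^2 (independent of the representative). *)
Definition fderiv (f : ratfun R) : ratfun R :=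
  let r := repr f in
  ((\n_r)^`() * \d_r - \n_r * (\d_r)^`())%:F / ((\d_r) ^+ 2)%:F.

Definition fderivn (k : nat) (f : ratfun R) : ratfun R := iter k fderiv f.

Definition strictly_proper (f : ratfun R) : Prop :=
  exists p q : {poly R}, [/\ q != 0, (size p < size q)%N & f = p%:F / q%:F].

(* X has expansion at infinity sum_{t>=0} x(t) z^{-(t+1)}:
   for every N, z^N X - sum_{t<N} x(t) z^{N-1-t} = O(1/z). *)
Definition expansion_at_infinity (x : nat -> R) (X : ratfun R) : Prop :=
  forall N : nat,
    strictly_proper (zF ^+ N * X - \sum_(t < N) (x t)%:P%:F * zF ^+ (N - 1 - t)).

(* x satisfies x(t+m) = c_1 x(t+m-1) + ... + c_m x(t), with c_(i+1) = c i. *)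
Definition satisfies_lde (m : nat) (c : 'I_m -> R) (x : nat -> R) : Prop :=
  forall t : nat, x (t + m)%N = \sum_(i < m) c i * x (t + m - 1 - i)%N.

End RatFun.

(* Main.v *)
Require Import Defs.
From HB Require Import structures.
From mathcomp Require Import all_boot all_order all_algebra.
From mathcomp Require Import generic_quotient ring zify.
Import Order.TTheory GRing.Theory Num.Theory.
Local Open Scope ring_scope.

Section S.
Variable R : realFieldType.
Local Notation K := (ratfun R).
Lemma pi_frac (r : {ratio {poly R}}) :
  (\pi_(K)%qT r) = (\n_r)%:F / (\d_r)%:F.
Proof.
have hd : (\d_r)%:F != 0 :> K.
  by rewrite tofrac_eq0 denom_ratioP.
apply: (mulIf hd); rewrite divfK //.
unlock FracField.tofrac.
rewrite -[_ * _]/(FracField.mul _ _) -FracField.pi_mul.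
apply/eqmodP; rewrite /= FracField.equivfE /FracField.mulf.
rewrite !numden_Ratio ?mulr1 ?mul1r ?oner_neq0 ?denom_ratioP ?mulf_neq0 //.
by rewrite mulrC.
Qed.
Lemma frac_repr (f : K) :
  f = (\n_(repr f))%:F / (\d_(repr f))%:F.
Proof. by rewrite -pi_frac reprK. Qed.

Lemma tofrac_neq0 {q : {poly R}} : q != 0 -> q%:F != 0 :> K.
Proof. by rewrite tofrac_eq0. Qed.

Lemma cross (p q n d : {poly R}) : q != 0 -> d != 0 ->
  p%:F / q%:F = n%:F / d%:F :> K -> p * d = n * q.
Proof.
move=> hq hd /eqP; rewrite eqr_div ?tofrac_neq0 // -!rmorphM /= tofrac_eq.
by move/eqP.
Qed.

Lemma aux1 (F : fieldType) (P Q D P' Q' D' : F) : Q != 0 -> D != 0 ->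
 ((P' * D + P * D' - P * D / Q * Q') / Q * D - P * D / Q * D') / D ^+ 2
   = (P' * Q - P * Q') / Q ^+ 2.
Proof. move=> hQ hD. field. by rewrite hQ hD. Qed.

Lemma fderiv_frac (p q : {poly R}) : q != 0 ->
  fderiv (p%:F / q%:F) = ((p^`() * q - p * q^`())%:F / (q ^+ 2)%:F).
Proof.
move=> hq; rewrite /fderiv.
set f := p%:F / q%:F.
have := frac_repr f.
set n := \n_(repr f); set d := \d_(repr f) => hf.
have hd : d != 0 by exact: denom_ratioP.
clearbody n d.
have e1 : p * d = n * q by apply: cross => //; exact: hf.
have e2 : p^`() * d + p * d^`() = n^`() * q + n * q^`().
  by rewrite -!derivM e1.
have hQ : q%:F != 0 :> K by rewrite tofrac_eq0.
have hD : d%:F != 0 :> K by rewrite tofrac_eq0.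
have E1 : n%:F = p%:F * d%:F / q%:F :> K.
  by rewrite -tofracM e1 tofracM (mulfK hQ).
have E2 : (n^`())%:F = ((p^`())%:F * d%:F + p%:F * (d^`())%:F - n%:F * (q^`())%:F) / q%:F :> K.
  by rewrite -!tofracM -tofracD -tofracB e2 addrK tofracM (mulfK hQ).
rewrite !tofracB ?tofracXn !tofracM ?tofracXn E2 E1.
exact: (@aux1 K (p%:F) (q%:F) (d%:F) ((p^`())%:F) ((q^`())%:F) ((d^`())%:F) hQ hD).
Qed.

Lemma fderiv_poly (p : {poly R}) : fderiv p%:F = (p^`())%:F.
Proof.
have h1 : (1 : {poly R}) != 0 by exact: oner_neq0.
have := @fderiv_frac p 1 h1.
by rewrite tofrac1 !divr1 derivC mulr0 subr0 mulr1 expr1n tofrac1 divr1.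
Qed.

Lemma fderivC (c : R) : fderiv (c%:P)%:F = 0.
Proof. by rewrite fderiv_poly derivC tofrac0. Qed.

Section Aux.
Variable F : fieldType.
Lemma auxS (A B C E : F) : B != 0 -> E != 0 -> A / B + C / E = (A * E + C * B) / (B * E).
Proof. move=> hB hE; field; by rewrite hB hE. Qed.
Lemma auxM (A B C E : F) : B != 0 -> E != 0 -> A / B * (C / E) = (A * C) / (B * E).
Proof. move=> hB hE; field; by rewrite hB hE. Qed.
Lemma auxD (A B C E A' B' C' E' : F) : B != 0 -> E != 0 ->
  ((A' * E + A * E' + (C' * B + C * B')) * (B * E) - (A * E + C * B) * (B' * E + B * E')) / (B * E) ^+ 2
  = (A' * B - A * B') / B ^+ 2 + (C' * E - C * E') / E ^+ 2.
Proof. move=> hB hE; field; by rewrite hB hE. Qed.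
Lemma auxP (A B C E A' B' C' E' : F) : B != 0 -> E != 0 ->
  ((A' * C + A * C') * (B * E) - (A * C) * (B' * E + B * E')) / (B * E) ^+ 2
  = (A' * B - A * B') / B ^+ 2 * (C / E) + A / B * ((C' * E - C * E') / E ^+ 2).
Proof. move=> hB hE; field; by rewrite hB hE. Qed.
End Aux.

Section Gen.
Variable F : comRingType.
Lemma G1 (z X T : F) (N n : nat) (c : 'I_n -> F) :
  z ^+ N * (z ^+ n * X - \sum_(i < n) c i * (z ^+ (n - 1 - i) * X) - T)
  = z ^+ (n + N) * X - \sum_(i < n) c i * (z ^+ (n - 1 - i + N) * X) - z ^+ N * T.
Proof.
rewrite !mulrBr mulr_sumr exprD; congr (_ - _ - _); first by ring.
by apply: eq_bigr => i _; rewrite exprD; ring.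
Qed.
Lemma G3 (Y1 s1 W : F) (n : nat) (c Y s2 : 'I_n -> F) :
  s1 - \sum_(i < n) c i * s2 i = W ->
  Y1 - \sum_(i < n) c i * Y i - W = (Y1 - s1) - \sum_(i < n) c i * (Y i - s2 i).
Proof.
move=> <-.
have -> : \sum_(i < n) c i * (Y i - s2 i) = \sum_(i < n) c i * Y i - \sum_(i < n) c i * s2 i.
  by rewrite -sumrB; apply: eq_bigr => i _; rewrite mulrBr.
set u := \sum_(i < n) _; set v := \sum_(i < n) _; ring.
Qed.
Lemma G2 (T Y Aa : F) (n : nat) (c U B : 'I_n -> F) :
  \sum_(i < n) c i * B i = Aa ->
  (T * Y + Aa) - \sum_(i < n) c i * (U i * Y + B i) = (T - \sum_(i < n) c i * U i) * Y.
Proof.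
move=> hs.
rewrite (eq_bigr (fun i => c i * U i * Y + c i * B i)); last by move=> i _; ring.
rewrite big_split /= hs -mulr_suml; set u := \sum_(i < n) _; ring.
Qed.
End Gen.

Lemma repr2 (f : K) : exists p q : {poly R}, q != 0 /\ f = p%:F / q%:F.
Proof. exists (\n_(repr f)), (\d_(repr f)); split; [exact: denom_ratioP | exact: frac_repr]. Qed.

Lemma fderivD (f g : K) : fderiv (f + g) = fderiv f + fderiv g.
Proof.
have [a [b [hb ->]]] := repr2 f.
have [c [e [he ->]]] := repr2 g.
have hbe : b * e != 0 by rewrite mulf_neq0.
have hB : b%:F != 0 :> K by rewrite tofrac_eq0.
have hE : e%:F != 0 :> K by rewrite tofrac_eq0.
have -> : a%:F / b%:F + c%:F / e%:F = (a * e + c * b)%:F / (b * e)%:F :> K.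
  by rewrite tofracD !tofracM (@auxS K (a%:F) (b%:F) (c%:F) (e%:F) hB hE).
rewrite (fderiv_frac _ _ hbe) (fderiv_frac _ _ hb) (fderiv_frac _ _ he) !derivD !derivM.
rewrite !tofracB ?tofracXn ?tofracD ?tofracM ?tofracXn ?tofracD ?tofracM.
exact: (@auxD K (a%:F) (b%:F) (c%:F) (e%:F) _ _ _ _ hB hE).
Qed.

Lemma fderivM (f g : K) : fderiv (f * g) = fderiv f * g + f * fderiv g.
Proof.
have [a [b [hb ->]]] := repr2 f.
have [c [e [he ->]]] := repr2 g.
have hbe : b * e != 0 by rewrite mulf_neq0.
have hB : b%:F != 0 :> K by rewrite tofrac_eq0.
have hE : e%:F != 0 :> K by rewrite tofrac_eq0.
have -> : a%:F / b%:F * (c%:F / e%:F) = (a * c)%:F / (b * e)%:F :> K.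
  by rewrite !tofracM (@auxM K (a%:F) (b%:F) (c%:F) (e%:F) hB hE).
rewrite (fderiv_frac _ _ hbe) (fderiv_frac _ _ hb) (fderiv_frac _ _ he) !derivM.
rewrite !tofracB ?tofracXn ?tofracD ?tofracM ?tofracXn ?tofracD ?tofracM.
exact: (@auxP K (a%:F) (b%:F) (c%:F) (e%:F) _ _ _ _ hB hE).
Qed.

Lemma fderiv0 : fderiv (0 : K) = 0.
Proof. by rewrite -tofrac0 fderiv_poly deriv0 tofrac0. Qed.

Lemma fderivN (f : K) : fderiv (- f) = - fderiv f.
Proof.
apply/eqP; rewrite -subr_eq0 opprK -fderivD.
by rewrite addNr fderiv0.
Qed.

Lemma fderivB (f g : K) : fderiv (f - g) = fderiv f - fderiv g.
Proof. by rewrite fderivD fderivN. Qed.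

Lemma fderiv_sum I (r : seq I) (P : pred I) (F : I -> K) :
  fderiv (\sum_(i <- r | P i) F i) = \sum_(i <- r | P i) fderiv (F i).
Proof. exact: (big_morph _ fderivD fderiv0). Qed.

Lemma fderivZc (c : R) (f : K) : fderiv ((c%:P)%:F * f) = (c%:P)%:F * fderiv f.
Proof. by rewrite fderivM fderivC mul0r add0r. Qed.

Lemma fderivnS k (f : K) : fderivn k.+1 f = fderiv (fderivn k f).
Proof. by []. Qed.

Lemma fderivnD k (f g : K) : fderivn k (f + g) = fderivn k f + fderivn k g.
Proof. by elim: k => [//|k IH]; rewrite !fderivnS IH fderivD. Qed.

Lemma fderivn0 k : fderivn k (0 : K) = 0.
Proof. by elim: k => [//|k IH]; rewrite fderivnS IH fderiv0. Qed.

Lemma fderivnN k (f : K) : fderivn k (- f) = - fderivn k f.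
Proof. by elim: k => [//|k IH]; rewrite !fderivnS IH fderivN. Qed.

Lemma fderivnB k (f g : K) : fderivn k (f - g) = fderivn k f - fderivn k g.
Proof. by rewrite fderivnD fderivnN. Qed.

Lemma fderivn_sum k I (r : seq I) (P : pred I) (F : I -> K) :
  fderivn k (\sum_(i <- r | P i) F i) = \sum_(i <- r | P i) fderivn k (F i).
Proof. exact: (big_morph _ (fderivnD k) (fderivn0 k)). Qed.

Lemma fderivnZc k (c : R) (f : K) : fderivn k ((c%:P)%:F * f) = (c%:P)%:F * fderivn k f.
Proof. by elim: k => [//|k IH]; rewrite !fderivnS IH fderivZc. Qed.

Lemma fderivn_poly k (p : {poly R}) : fderivn k p%:F = (p^`(k))%:F.
Proof. by elim: k => [|k IH]; rewrite ?derivn0 // fderivnS IH fderiv_poly derivnS. Qed.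

Lemma fderivn_add m k (f : K) : fderivn (m + k) f = fderivn m (fderivn k f).
Proof. exact: iterD. Qed.

Lemma deriv0_const (p : {poly R}) : p^`() = 0 -> p = (p`_0)%:P.
Proof.
move=> h; apply/polyP => i; rewrite coefC.
case: i => [//|j].
have := coef_deriv p j; rewrite h coef0 => /esym/eqP.
by rewrite mulrn_eq0 /= => /eqP.
Qed.

Lemma fderiv_eq0 (f : K) : fderiv f = 0 -> exists c : R, f = (c%:P)%:F.
Proof.
have [a [b [hb ->]]] := repr2 f.
have [->|ha] := eqVneq a 0.
  move=> _; exists 0; rewrite tofrac0 mul0r; apply/esym/eqP; rewrite tofrac_eq0 polyC_eq0 eqxx //.
set g := gcdp a b.
have hg : g != 0 by rewrite gcdp_eq0 negb_and ha.
set a1 := a %/ g; set b1 := b %/ g.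
have ea : a = a1 * g by rewrite divpK // dvdp_gcdl.
have eb : b = b1 * g by rewrite divpK // dvdp_gcdr.
have hb1 : b1 != 0 by apply: contraNneq hb => e; rewrite eb e mul0r.
have cop : coprimep a1 b1 by apply: coprimep_div_gcd; rewrite ha.
have hG : g%:F != 0 :> K by rewrite tofrac_eq0.
have hB1 : b1%:F != 0 :> K by rewrite tofrac_eq0.
have -> : a%:F / b%:F = a1%:F / b1%:F :> K.
  by rewrite ea eb !tofracM invfM mulrACA (divff hG) mulr1.
clearbody a1 b1.
rewrite (fderiv_frac _ _ hb1) => /eqP.
rewrite mulf_eq0 invr_eq0 !tofrac_eq0 expf_eq0 (negbTE hb1) andbF orbF subr_eq0 => /eqP e.
have hdb : b1^`() = 0.
  apply/eqP; apply: contraT => hnz.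
  have : b1 %| b1^`().
    rewrite -(@Gauss_dvdpr _ _ a1); last by rewrite coprimep_sym.
    by rewrite -e dvdp_mull.
  move/(dvdp_leq hnz); rewrite leqNgt.
  by rewrite lt_size_deriv.
move: e; rewrite hdb mulr0 => /eqP; rewrite mulf_eq0 (negbTE hb1) orbF => /eqP hda.
rewrite (deriv0_const _ hda) (deriv0_const _ hdb).
exists (a1`_0 / b1`_0).
have hb0 : b1`_0 != 0.
  by apply: contraNneq hb1 => e0; rewrite (deriv0_const _ hdb) e0.
have hB0 : (b1`_0)%:P%:F != 0 :> K by rewrite tofrac_eq0 polyC_eq0.
apply: (mulIf hB0); rewrite (divfK hB0) -tofracM -polyCM (divfK hb0).
by [].
Qed.

Definition prim (p : {poly R}) : {poly R} :=
  \poly_(i < (size p).+1) (if i is j.+1 then p`_j / j.+1%:R else 0).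

Lemma prim_deriv p : (prim p)^`() = p.
Proof.
apply/polyP => i; rewrite coef_deriv /prim coef_poly ltnS /=.
case: ltnP => hi.
  have h : (i.+1%:R : R) != 0 by rewrite pnatr_eq0.
  by rewrite -(mulr_natr (p`_i / i.+1%:R)) (divfK h).
by rewrite mul0rn nth_default.
Qed.

Lemma size_prim p : (size (prim p) <= (size p).+1)%N.
Proof. exact: size_poly. Qed.

Lemma fderivn_eq0 k (f : K) : fderivn k f = 0 -> exists p : {poly R}, (size p <= k)%N /\ f = p%:F.
Proof.
elim: k f => [|k IH] f.
  by move=> /= ->; exists 0; rewrite size_poly0 tofrac0.
rewrite -addn1 fderivn_add /= => /IH [p [hp hf]].
have : fderiv (f - (prim p)%:F) = 0 by rewrite fderivB hf fderiv_poly prim_deriv subrr.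
move=> /fderiv_eq0 [c hc].
exists (prim p + c%:P); split.
  rewrite (leq_trans (size_add _ _)) // geq_max addn1 (leq_trans (size_prim p)) ?ltnS //.
  by rewrite (leq_trans (size_polyC_leq1 c)).
by rewrite tofracD -hc addrC subrK.
Qed.

Lemma size_mul_lt (p q r : {poly R}) : (size p < size q)%N -> r != 0 ->
  (size (p * r)%R < size (q * r)%R)%N.
Proof.
move=> hpq hr.
have hq : q != 0 by rewrite -size_poly_gt0 (leq_ltn_trans _ hpq).
have [->|hp] := eqVneq p 0; first by rewrite mul0r size_poly0 size_poly_gt0 mulf_neq0.
have e1 : size (p * r)%R = (size p + size r).-1 by rewrite size_mul.
have e2 : size (q * r)%R = (size q + size r).-1 by rewrite size_mul.
have hr1 : (0 < size r)%N by rewrite size_poly_gt0.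
rewrite e1 e2; lia.
Qed.

Lemma sp0 : strictly_proper (0 : K).
Proof.
exists 0, 1; split; first exact: oner_neq0.
  by rewrite size_poly0 size_poly1.
by rewrite tofrac0 mul0r.
Qed.

Lemma spD (f g : K) : strictly_proper f -> strictly_proper g -> strictly_proper (f + g).
Proof.
move=> [a [b [hb hab ->]]] [c [e [he hce ->]]].
have hB : b%:F != 0 :> K by rewrite tofrac_eq0.
have hE : e%:F != 0 :> K by rewrite tofrac_eq0.
exists (a * e + c * b), (b * e); split; first by rewrite mulf_neq0.
  rewrite (leq_ltn_trans (size_polyD _ _)) // gtn_max; apply/andP; split.
    exact: size_mul_lt.
  rewrite [b * e]mulrC; exact: size_mul_lt.
by rewrite tofracD !tofracM (@auxS K (a%:F) (b%:F) (c%:F) (e%:F) hB hE).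
Qed.

Lemma spZ (c : R) (f : K) : strictly_proper f -> strictly_proper ((c%:P)%:F * f).
Proof.
move=> [a [b [hb hab ->]]].
exists (c%:P * a), b; split => //.
  by rewrite mul_polyC (leq_ltn_trans (size_scale_leq _ _)).
by rewrite tofracM mulrA.
Qed.

Lemma spN (f : K) : strictly_proper f -> strictly_proper (- f).
Proof.
move=> h; have := @spZ (-1) f h.
by rewrite polyCN tofracN polyC1 tofrac1 mulN1r.
Qed.

Lemma spB (f g : K) : strictly_proper f -> strictly_proper g -> strictly_proper (f - g).
Proof. by move=> hf hg; apply: spD => //; apply: spN. Qed.

Lemma sp_sum I (r : seq I) (P : pred I) (F : I -> K) :
  (forall i, P i -> strictly_proper (F i)) -> strictly_proper (\sum_(i <- r | P i) F i).
Proof.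
move=> h; elim/big_rec: _ => [|i y Pi hy]; first exact: sp0.
by apply: spD => //; apply: h.
Qed.

Lemma sp_poly (p : {poly R}) : strictly_proper p%:F -> p = 0.
Proof.
move=> [a [b [hb hab e]]].
have := @cross p 1 a b (oner_neq0 _) hb.
rewrite tofrac1 divr1 mulr1 => /(_ e) hpb.
apply/eqP; apply: contraT => hp.
have e1 : size (p * b)%R = (size p + size b).-1 by rewrite size_mul.
have hp1 : (0 < size p)%N by rewrite size_poly_gt0.
move: e1; rewrite hpb => e1.
lia.
Qed.

Lemma zFX N : zF R ^+ N = ('X^N)%:F.
Proof. by rewrite /zF tofracXn. Qed.

Lemma sp_big (E : K) : (forall N, strictly_proper (zF R ^+ N * E)) -> E = 0.
Proof.
have [p [q [hq ->]]] := repr2 E.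
move=> /(_ (size q)); rewrite zFX mulrA -tofracM.
move=> [a [b [hb hab e]]].
have hpb := @cross _ _ _ _ hq hb e.
have [->|hp] := eqVneq p 0; first by rewrite tofrac0 mul0r.
have hX : 'X^(size q) != 0 :> {poly R} by rewrite -size_poly_gt0 size_polyXn.
have e1 : size ('X^(size q) * p * b)%R = (size q + size p + size b).-1.
  by rewrite size_mul ?mulf_neq0 // size_mul // size_polyXn addSn.
have e2 : (size (a * q)%R <= (size a + size q).-1)%N by exact: size_polyMleq.
have hp1 : (0 < size p)%N by rewrite size_poly_gt0.
have hb1 : (0 < size b)%N by rewrite size_poly_gt0.
move: e1; rewrite hpb => e1.
lia.
Qed.

Definition Tp (g : nat -> R) (M : nat) : {poly R} :=
  \sum_(t < M) (g t)%:P * 'X^(M - 1 - t).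

Lemma S_eq (g : nat -> R) M : \sum_(t < M) (g t)%:P%:F * zF R ^+ (M - 1 - t) = (Tp g M)%:F.
Proof.
rewrite /Tp rmorph_sum /=; apply: eq_bigr => t _.
by rewrite tofracM zFX.
Qed.

Lemma TpS (g : nat -> R) M : Tp g M.+1 = Tp g M * 'X + (g M)%:P.
Proof.
rewrite /Tp big_ord_recr /=.
have -> : (M.+1 - 1 - M = 0)%N by lia.
rewrite expr0 mulr1 mulr_suml; congr (_ + _).
apply: eq_bigr => t _; rewrite -mulrA -exprSr; congr (_ * 'X^_).
have := ltn_ord t; lia.
Qed.

Lemma TpD (g : nat -> R) n N : Tp g (n + N)%N = Tp g n * 'X^N + Tp (fun s => g (n + s)%N) N.
Proof.
elim: N => [|N IH]; first by rewrite addn0 expr0 mulr1 /Tp big_ord0 addr0.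
rewrite addnS !TpS IH mulrDl -mulrA -exprSr addrA.
by [].
Qed.

Lemma Tp_coef0 (g : nat -> R) M : (Tp g M.+1)`_0 = g M.
Proof. by rewrite TpS coefD coefMX coefC /= add0r. Qed.

Lemma size_Tp (g : nat -> R) M : (size (Tp g M) <= M)%N.
Proof.
rewrite /Tp; elim/big_rec: _ => [|t y _ hy]; first by rewrite size_poly0.
rewrite (leq_trans (size_polyD _ _)) // geq_max hy andbT.
rewrite mul_polyC (leq_trans (size_scale_leq _ _)) // size_polyXn.
have := ltn_ord t; lia.
Qed.

Lemma Tp_ext (g h : nat -> R) N : (forall s, g s = h s) -> Tp g N = Tp h N.
Proof. by move=> e; apply: eq_bigr => t _; rewrite e. Qed.

Lemma Tp_lin n (c : 'I_n -> R) (g : 'I_n -> nat -> R) N :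
  \sum_(i < n) (c i)%:P * Tp (g i) N = Tp (fun s => \sum_(i < n) c i * g i s) N.
Proof.
rewrite /Tp (eq_bigr (fun i => \sum_(t < N) (c i)%:P * ((g i t)%:P * 'X^(N - 1 - t)))); last first.
  by move=> i _; rewrite mulr_sumr.
rewrite exchange_big /=; apply: eq_bigr => t _.
rewrite rmorph_sum /= mulr_suml; apply: eq_bigr => i _.
by rewrite polyCM mulrA.
Qed.

Lemma F3 n (a : 'I_n -> R) (x : nat -> R) (hrec : satisfies_lde a x) (X : K)
  (hX : expansion_at_infinity x X) :
  exists T0 : {poly R}, (size T0 <= n)%N /\
    zF R ^+ n * X = T0%:F + \sum_(i < n) (a i)%:P%:F * (zF R ^+ (n - 1 - i) * X).
Proof.
have hX' m : strictly_proper (zF R ^+ m * X - (Tp x m)%:F) by rewrite -S_eq; exact: hX.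
set T0 := Tp x n - \sum_(i < n) (a i)%:P * Tp x (n - 1 - i)%N.
exists T0; split.
  rewrite /T0 (leq_trans (size_polyD _ _)) // geq_max size_Tp /= size_polyN.
  elim/big_rec: _ => [|i y _ hy]; first by rewrite size_poly0.
  rewrite (leq_trans (size_polyD _ _)) // geq_max hy andbT.
  rewrite mul_polyC (leq_trans (size_scale_leq _ _)) // (leq_trans (size_Tp _ _)) //.
  lia.
have PI N : Tp x (n + N)%N - \sum_(i < n) (a i)%:P * Tp x (n - 1 - i + N)%N = T0 * 'X^N.
  rewrite TpD (eq_bigr (fun i : 'I_n => (a i)%:P * (Tp x (n - 1 - i)%N * 'X^N + Tp (fun s => x (n - 1 - i + s)%N) N))); last first.
    by move=> i _; rewrite TpD.
  rewrite /T0; apply: G2.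
  rewrite Tp_lin; apply: Tp_ext => s.
  rewrite addnC hrec; apply: eq_bigr => i _; congr (_ * x _).
  have := ltn_ord i; lia.
have hE : zF R ^+ n * X - \sum_(i < n) (a i)%:P%:F * (zF R ^+ (n - 1 - i) * X) - T0%:F = 0.
  apply: sp_big => N.
  rewrite G1.
  rewrite (@G3 K _ ((Tp x (n + N)%N)%:F) _ n _ _ (fun i : 'I_n => (Tp x (n - 1 - i + N)%N)%:F)); last first.
    have := congr1 (fun p => p%:F : K) (PI N).
    rewrite /= tofracB tofracM zFX mulrC => <-; congr (_ - _).
    rewrite rmorph_sum; apply: eq_bigr => i _.
    by rewrite rmorphM.
  apply: spB; first exact: hX'.
  by apply: sp_sum => i _; apply: spZ; exact: hX'.
by move/eqP: hE; rewrite subr_eq0 subr_eq addrC => /eqP.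
Qed.

Lemma poly_expand (C : {poly R}) : C = \sum_(j < size C) (C`_j)%:P * 'X^j.
Proof.
rewrite -[C in LHS]coefK poly_def; apply: eq_bigr => j _.
by rewrite mul_polyC.
Qed.

Lemma rec_from_poly (x : nat -> R) (X : K) (hX : expansion_at_infinity x X)
  (C P : {poly R}) : C%:F * X = P%:F ->
  forall t, \sum_(j < size C) C`_j * x (t + j)%N = 0.
Proof.
move=> hCP t.
have hX' m : strictly_proper (zF R ^+ m * X - (Tp x m)%:F) by rewrite -S_eq; exact: hX.
set N := t.+1.
have e : (P * 'X^N - \sum_(j < size C) (C`_j)%:P * Tp x (j + N)%N)%:F
    = \sum_(j < size C) (C`_j)%:P%:F * (zF R ^+ (j + N) * X - (Tp x (j + N)%N)%:F) :> K.
  have -> : \sum_(j < size C) (C`_j)%:P%:F * (zF R ^+ (j + N) * X - (Tp x (j + N)%N)%:F)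
     = \sum_(j < size C) (C`_j)%:P%:F * (zF R ^+ j) * X * zF R ^+ N
       - \sum_(j < size C) (C`_j)%:P%:F * (Tp x (j + N)%N)%:F.
    rewrite -sumrB; apply: eq_bigr => j _.
    by rewrite mulrBr exprD -!mulrA [X * _]mulrC.
  rewrite tofracB; congr (_ - _); last first.
    by rewrite rmorph_sum; apply: eq_bigr => j _; rewrite rmorphM.
  rewrite -!mulr_suml tofracM -zFX -hCP; congr (_ * _ * _).
  rewrite {1}(poly_expand C) rmorph_sum; apply: eq_bigr => j _.
  by rewrite rmorphM /= zFX.
have hsp : strictly_proper ((P * 'X^N - \sum_(j < size C) (C`_j)%:P * Tp x (j + N)%N)%:F).
  rewrite e; apply: sp_sum => j _; apply: spZ; exact: hX'.
have := congr1 (fun p : {poly R} => p`_0) (sp_poly _ hsp).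
rewrite coefB coefMXn /= coef_sum coef0 sub0r => /eqP; rewrite oppr_eq0 => /eqP h0.
apply: (etrans _ h0); apply: eq_bigr => j _; rewrite coefCM /N addnS Tp_coef0 addnC.
by [].
Qed.

Lemma lde_from (x : nat -> R) (C : {poly R}) : C != 0 ->
  (forall t, \sum_(j < size C) C`_j * x (t + j)%N = 0) ->
  satisfies_lde (fun i : 'I_(size C).-1 => - C`_((size C).-1 - 1 - i)%N / C`_((size C).-1)) x.
Proof.
move=> hC h t.
set m := (size C).-1.
have hs : size C = m.+1 by rewrite /m prednK // size_poly_gt0.
have hl : C`_m != 0 by rewrite -lead_coefE lead_coef_eq0.
have := h t; rewrite -(big_mkord xpredT (fun j => C`_j * x (t + j)%N)) hs big_mkord big_ord_recr /=.
move=> /eqP; rewrite addr_eq0 => /eqP hsum.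
rewrite (reindex_inj rev_ord_inj) /=.
rewrite (eq_bigr (fun i : 'I_m => - (C`_i * x (t + i)%N) / C`_m)); last first.
  move=> i _.
  have -> : (m - 1 - (m - i.+1) = i)%N by have := ltn_ord i; lia.
  have -> : (t + m - 1 - (m - i.+1) = t + i)%N by have := ltn_ord i; lia.
  by rewrite mulrAC mulNr.
rewrite -mulr_suml sumrN hsum opprK mulrC mulKf //.
Qed.

Lemma fderiv1 : fderiv (1 : K) = 0.
Proof. by rewrite -tofrac1 -polyC1 fderivC. Qed.

Lemma wronsk k (g : 'I_k -> K)
  (hind : forall c : 'I_k -> R, \sum_(i < k) (c i)%:P%:F * g i = 0 -> forall i, c i = 0) :
  forall (S : {set 'I_k}) (v : 'I_k -> K),
  (forall mu, (mu < #|S|)%N -> \sum_(i in S) v i * fderivn mu (g i) = 0) ->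
  forall i, i \in S -> v i = 0.
Proof.
suff H : forall m (S : {set 'I_k}) (v : 'I_k -> K), #|S| = m ->
  (forall mu, (mu < m)%N -> \sum_(i in S) v i * fderivn mu (g i) = 0) ->
  forall i, i \in S -> v i = 0.
  by move=> S v hv i hi; apply: (H #|S| S v erefl hv i hi).
elim=> [|m IH] S v hS hv j hj.
  by move/eqP: hS; rewrite cards_eq0 => /eqP hS; rewrite hS in_set0 in hj.
apply/eqP; apply: contraT => hvj.
set w := fun l => v l / v j.
have hw mu : (mu < m.+1)%N -> \sum_(l in S) w l * fderivn mu (g l) = 0.
  move=> hmu; have := congr1 (fun y => y / v j) (hv mu hmu).
  rewrite /= mul0r mulr_suml => h0; apply: (etrans _ h0); apply: eq_bigr => l _.
  by rewrite /w mulrAC.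
have hwj : w j = 1 by rewrite /w (divff hvj).
have hd mu : (mu < m)%N -> \sum_(l in S :\ j) fderiv (w l) * fderivn mu (g l) = 0.
  move=> hmu.
  have := congr1 (@fderiv R) (hw mu (ltnW hmu)).
  rewrite fderiv0 fderiv_sum.
  rewrite (eq_bigr (fun l => fderiv (w l) * fderivn mu (g l) + w l * fderivn mu.+1 (g l))); last first.
    by move=> l _; rewrite fderivM.
  rewrite big_split /= (hw mu.+1 hmu) addr0.
  rewrite (bigD1 j) //= hwj fderiv1 mul0r add0r => h0.
  by apply: (etrans _ h0); apply: eq_bigl => l; rewrite in_setD1 andbC.
have hSj : #|S :\ j| = m.
  by move: hS; rewrite (cardsD1 j) hj add1n => -[].
have hw' : forall l, l \in S -> fderiv (w l) = 0.
  move=> l hl; have [->|hlj] := eqVneq l j; first by rewrite hwj fderiv1.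
  apply: (IH (S :\ j) (fun l => fderiv (w l)) hSj hd l).
  by rewrite in_setD1 hlj hl.
have : forall l, exists c : R, l \in S -> w l = (c%:P)%:F.
  move=> l; case: (boolP (l \in S)) => hl; last by exists 0.
  by have [c hc] := fderiv_eq0 _ (hw' l hl); exists c.
move=> /fin_all_exists [c hc].
have := hind (fun l => if l \in S then c l else 0).
have hsum : \sum_(i < k) ((if i \in S then c i else 0)%:P)%:F * g i = 0.
  have := hw 0%N (ltn0Sn m); rewrite big_mkcond /= => h0.
  apply: (etrans _ h0); apply: eq_bigr => l _; case: (boolP (l \in S)) => hl.
    by rewrite (hc l hl).
  by rewrite polyC0 tofrac0 mul0r.
move=> /(_ hsum j); rewrite hj => hcj.
have := hc j hj; rewrite hwj hcj polyC0 tofrac0 => /eqP.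
by rewrite oner_eq0.
Qed.
End S.

Theorem corollary1 (R : realFieldType) (n : nat) (hn : (0 < n)%N)
  (a : 'I_n -> R) (x : nat -> R)
  (hrec : satisfies_lde a x)
  (hmin : forall (m : nat) (c : 'I_m -> R), (m < n)%N -> ~ satisfies_lde c x)
  (X : ratfun R) (hX : expansion_at_infinity x X) :
  let N : 'M[ratfun R]_(n.+1) :=
    \matrix_(mu < n.+1, j < n.+1) fderivn (n + mu) (zF R ^+ (n - j) * X) in
  \rank N = n /\
  (forall alpha : 'I_n -> ratfun R,
     (forall mu : 'I_n.+1,
        fderivn (n + mu) (zF R ^+ n * X)
        = \sum_(i < n) alpha i * fderivn (n + mu) (zF R ^+ (n - 1 - i) * X))
     <-> (forall i : 'I_n, alpha i = (a i)%:P%:F)).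
Proof.
move=> N.
have [T0 [hT0 hF3]] := @F3 R n a x hrec X hX.
have hA mu : fderivn (n + mu) (zF R ^+ n * X)
    = \sum_(i < n) (a i)%:P%:F * fderivn (n + mu) (zF R ^+ (n - 1 - i) * X).
  rewrite hF3 fderivnD fderivn_poly derivn_poly0; last first.
    by rewrite (leq_trans hT0) // leq_addr.
  rewrite tofrac0 add0r fderivn_sum; apply: eq_bigr => i _.
  by rewrite fderivnZc.
have hind : forall c : 'I_n -> R,
    \sum_(i < n) (c i)%:P%:F * fderivn n (zF R ^+ (n - 1 - i) * X) = 0 ->
    forall i, c i = 0.
  move=> c hc.
  set C := \sum_(i < n) (c i)%:P * 'X^(n - 1 - i).
  have hCX : fderivn n (C%:F * X) = 0.
    rewrite -hc /C rmorph_sum /= mulr_suml fderivn_sum; apply: eq_bigr => i _.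
    by rewrite rmorphM /= -mulrA fderivnZc -zFX.
  have [P [_ hP]] := @fderivn_eq0 R n _ hCX.
  have hsz : (size C <= n)%N.
    rewrite /C; elim/big_rec: _ => [|i y _ hy]; first by rewrite size_poly0.
    rewrite (leq_trans (size_polyD _ _)) // geq_max hy andbT.
    rewrite mul_polyC (leq_trans (size_scale_leq _ _)) // size_polyXn.
    have := ltn_ord i; lia.
  have hC0 : C = 0.
    apply/eqP; apply: contraT => hC.
    have := @lde_from R x C hC (@rec_from_poly R x X hX C P hP).
    have hlt : ((size C).-1 < n)%N by lia.
    by move=> hl; case: (hmin _ _ hlt hl).
  move=> i; transitivity (C`_(n - 1 - i)); last by rewrite hC0 coef0.
  rewrite /C coef_sum (bigD1 i) //= coefCM coefXn eqxx mulr1 big1 ?addr0 //.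
  move=> j hji; rewrite coefCM coefXn.
  have -> : ((n - 1 - i)%N == (n - 1 - j)%N) = false.
    apply/negbTE/eqP => e; move/negP: hji; apply; apply/eqP/val_inj => /=.
    have := ltn_ord i; have := ltn_ord j; lia.
  by rewrite mulr0.
have hker : forall v : 'I_n -> ratfun R,
    (forall mu, (mu < n)%N ->
      \sum_(i < n) v i * fderivn (n + mu) (zF R ^+ (n - 1 - i) * X) = 0) ->
    forall i, v i = 0.
  move=> v hv i.
  apply: (@wronsk R n (fun i => fderivn n (zF R ^+ (n - 1 - i) * X)) hind setT v _ i (in_setT i)).
  rewrite cardsT card_ord => mu hmu.
  rewrite (eq_bigl xpredT); last by move=> j; rewrite in_setT.
  apply: (etrans _ (hv mu hmu)); apply: eq_bigr => j _.
  by rewrite -fderivn_add addnC.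
split; last first.
  move=> alpha; split.
    move=> H i; apply/eqP; rewrite -subr_eq0; apply/eqP.
    apply: (hker (fun i => alpha i - (a i)%:P%:F)) => mu hmu.
    have := H (Ordinal (leq_trans hmu (leqnSn n))); rewrite /= => e.
    rewrite (eq_bigr (fun i => alpha i * fderivn (n + mu) (zF R ^+ (n - 1 - i) * X)
       - (a i)%:P%:F * fderivn (n + mu) (zF R ^+ (n - 1 - i) * X))); last first.
      by move=> j _; rewrite mulrBl.
    by rewrite sumrB -e -(hA mu) subrr.
  move=> H mu.
  rewrite (eq_bigr (fun i => (a i)%:P%:F * fderivn (n + mu) (zF R ^+ (n - 1 - i) * X))).
    exact: hA.
  by move=> i _; rewrite H.
rewrite -mxrank_tr.
set v : 'rV[ratfun R]_(n.+1) :=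
  \row_(j < n.+1) (if unlift ord0 j is Some i then - (a i)%:P%:F else 1).
have hv00 : v 0 ord0 = 1 by rewrite mxE unlift_none.
have hvl i : v 0 (lift ord0 i) = - (a i)%:P%:F by rewrite mxE liftK.
have hNl mu i : N mu (lift ord0 i) = fderivn (n + mu) (zF R ^+ (n - 1 - i) * X).
  rewrite /N mxE; congr (fderivn _ (zF R ^+ _ * X)); rewrite lift0 subnS subnAC subn1.
  by [].
have hN0 mu : N mu ord0 = fderivn (n + mu) (zF R ^+ n * X).
  by rewrite /N mxE subn0.
have hvN : v *m N^T = 0.
  apply/rowP => mu; rewrite !mxE big_ord_recl.
  rewrite [N^T _ _]mxE hv00 hN0 mul1r hA.
  rewrite -big_split /=; apply: big1 => i _.
  by rewrite hvl [N^T _ _]mxE hNl mulNr addrN.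
have hcol : forall u : 'rV[ratfun R]_(n.+1), u *m N^T = 0 -> u = u 0 ord0 *: v.
  move=> u hu.
  set w := u - u 0 ord0 *: v.
  have hw0 : w 0 ord0 = 0 by rewrite /w !mxE unlift_none mulr1 subrr.
  have hwN : w *m N^T = 0 by rewrite /w mulmxBl -scalemxAl hu hvN scaler0 subrr.
  have hwi : forall i : 'I_n, w 0 (lift ord0 i) = 0.
    apply: (hker (fun i => w 0 (lift ord0 i))) => mu hmu.
    have := congr1 (fun M : 'rV[ratfun R]_(n.+1) => M 0 (Ordinal (leq_trans hmu (leqnSn n)))) hwN.
    rewrite /= !mxE big_ord_recl [N^T _ _]mxE hw0 mul0r add0r => h0.
    apply: (etrans _ h0); apply: eq_bigr => i _.
    by rewrite [N^T _ _]mxE hNl.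
  have hw : w = 0.
    apply/rowP => j; rewrite [RHS]mxE.
    by case: (unliftP ord0 j) => [i ->|->]; [exact: hwi | exact: hw0].
  by move/eqP: hw; rewrite /w subr_eq0 => /eqP.
have hv0 : v != 0.
  apply/eqP => h; have := congr1 (fun M : 'rV[ratfun R]_(n.+1) => M 0 ord0) h.
  by rewrite /= hv00 mxE => /eqP; rewrite oner_eq0.
have hk : \rank (kermx N^T) = 1%N.
  have -> : \rank (kermx N^T) = \rank v.
    apply: eqmx_rank; apply/andP; split.
      apply/row_subP => r; apply/sub_rVP.
      exists ((row r (kermx N^T)) 0 ord0); apply: hcol.
      by rewrite -row_mul mulmx_ker row0.
    by apply/sub_kermxP.
  by rewrite rank_rV hv0.
have := mxrank_ker N^T; rewrite hk.
have := rank_leq_row N^T.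
move: (\rank N^T) => r; lia.
Qed.
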